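(* Let $g:\{0,1,2,3\}^*\to\{0,1,2,3\}^*$ be the morphism $g(0)=01$, $g(1)=20$, $g(2)=23$, $g(3)=02$, and $\tau$ the coding $\tau(0)=2$, $\tau(1)=1$, $\tau(2)=0$, $\tau(3)=1$; let $\mathbf{vtm}=\tau(g^\omega(0))$. Let $\zeta:\{0,1,2\}^*\to\{0,1\}^*$ be the morphism $\zeta(0)=111000110010110001110010$, $\zeta(1)=111000101100011100101100010$, $\zeta(2)=111000110010110001011100101100$. Then the infinite word $\zeta(\mathbf{vtm})$ contains only three distinct squares, namely $0^2$, $1^2$, and $(01)^2$. It is generated by a $2$-automaton with $88$ states (so its weight is $2\cdot 88=176$).
   Context: A square is a nonempty word $xx$; ''containing'' means as a factor. $g^\omega(0)$ denotes the infinite fixed point of $g$ starting with $0$. A $2$-automaton (DFAO) with $s$ states generates $(a_n)_{n\ge0}$ if on input the base-$2$ representation of $n$ (most significant digit first) it outputs $a_n$; equivalently the word is the image under a coding of a fixed point of a $2$-uniform morphism on $s$ letters. The weight of such a word is $2\cdot s$. *)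

(* Defs.v *)
From mathcomp Require Import all_boot.
Set Implicit Arguments. Unset Strict Implicit. Unset Printing Implicit Defensive.

(* Letters are natural numbers; finite words are [seq nat];
   infinite words are functions [nat -> nat]. *)

Definition g (a : nat) : seq nat :=
  match a with
  | 0 => [:: 0; 1]
  | 1 => [:: 2; 0]
  | 2 => [:: 2; 3]
  | 3 => [:: 0; 2]
  | _ => [::]
  end.

Definition morph (h : nat -> seq nat) (w : seq nat) : seq nat := flatten (map h w).

Definition gpow (k : nat) : seq nat := iter k (morph g) [:: 0].

(* The fixed point g^omega(0): its n-th letter is the n-th letter of
   g^(n+1)(0), which has length 2^(n+1) > n (and g^k(0) is a prefix of
   g^(k+1)(0) since g(0) starts with 0). *)
Definition g_omega (n : nat) : nat := nth 0 (gpow n.+1) n.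

Definition tau (a : nat) : nat :=
  match a with
  | 0 => 2
  | 1 => 1
  | 2 => 0
  | 3 => 1
  | _ => 0
  end.

Definition vtm (n : nat) : nat := tau (g_omega n).

Definition zeta (a : nat) : seq nat :=
  match a with
  | 0 => [:: 1;1;1;0;0;0;1;1;0;0;1;0;1;1;0;0;0;1;1;1;0;0;1;0]
  | 1 => [:: 1;1;1;0;0;0;1;0;1;1;0;0;0;1;1;1;0;0;1;0;1;1;0;0;0;1;0]
  | 2 => [:: 1;1;1;0;0;0;1;1;0;0;1;0;1;1;0;0;0;1;0;1;1;1;0;0;1;0;1;1;0;0]
  | _ => [::]
  end.

(* The infinite word zeta(vtm): its n-th letter is the n-th letter of
   zeta(vtm[0..n]) (every zeta-image is nonempty, so this word has length > n). *)
Definition zeta_vtm (n : nat) : nat :=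
  nth 0 (morph zeta (mkseq vtm n.+1)) n.

Definition factor (w : nat -> nat) (i m : nat) : seq nat :=
  mkseq (fun j => w (i + j)) m.

Definition contains_square (w : nat -> nat) (x : seq nat) : Prop :=
  x <> [::] /\ exists i, factor w i (2 * size x) = x ++ x.

Fixpoint bin_lsb (fuel n : nat) : seq bool :=
  match fuel with
  | 0 => [::]
  | fuel'.+1 => if n is 0 then [::] else odd n :: bin_lsb fuel' n./2
  end.

(* Canonical base-2 representation of n, most significant digit first,
   without leading zeros (the representation of 0 is the empty word). *)
Definition bin_msd (n : nat) : seq bool := rev (bin_lsb n n).

Definition dfao_generates (s : nat) (q0 : 'I_s) (delta : 'I_s -> bool -> 'I_s)
  (out : 'I_s -> nat) (a : nat -> nat) : Prop :=
  forall n, out (foldl delta q0 (bin_msd n)) = a n.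

(* Main.v *)
Require Import Defs.
From mathcomp Require Import all_boot zify.
Set Implicit Arguments. Unset Strict Implicit. Unset Printing Implicit Defensive.


Fixpoint tmf (f n : nat) : bool :=
  match f with
  | 0 => false
  | f'.+1 => if n is 0 then false else xorb (odd n) (tmf f' n./2)
  end.
Definition tm n := tmf n n.

Lemma half_spec n : n = 2 * n./2 + odd n.
Proof. by rewrite -{1}(odd_double_half n) -muln2 mulnC addnC. Qed.

Lemma tmf_indep f f' n : n <= f -> n <= f' -> tmf f n = tmf f' n.
Proof.
elim: f f' n => [|f IH] [|f'] n /= H1 H2.
- by [].
- by move: H1; rewrite leqn0 => /eqP ->.
- by move: H2; rewrite leqn0 => /eqP ->.
- case: n H1 H2 => [//|n] H1 H2; congr xorb; apply: IH.
  + rewrite leq_half_double -muln2; lia.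
  + rewrite leq_half_double -muln2; lia.
Qed.

Lemma tmfS f m : tmf f.+1 m.+1 = xorb (odd m.+1) (tmf f (m.+1)./2).
Proof. by []. Qed.

Lemma tm2 n (b : bool) : tm (n.*2 + b) = xorb b (tm n).
Proof.
rewrite /tm.
case E: (n.*2 + b) => [|k].
  have [-> ->] : n = 0 /\ b = false by move: E; rewrite -muln2; case: b; lia.
  by [].
rewrite tmfS -E.
rewrite addnC half_bit_double addnC.
rewrite oddD odd_double /=.
have -> : tmf k n = tmf n n by apply: tmf_indep => //; move: E; rewrite -muln2; lia.
by case: b {E}.
Qed.

Lemma tmE n : tm (2 * n) = tm n /\ tm (2 * n + 1) = ~~ tm n.
Proof.
have := tm2 n false; have := tm2 n true; rewrite -mul2n /= addn0 => -> ->.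
by case: (tm n).
Qed.

Lemma tm_even m : ~~ odd m -> tm m.+1 = ~~ tm m.
Proof.
move=> Om; rewrite (half_spec m) (negbTE Om) addn0 -addn1.
by have [-> ->] := tmE m./2.
Qed.

Lemma overlap_free p : 0 < p -> forall i, ~ (forall k, k <= p -> tm (i + k) = tm (i + p + k)).
Proof.
elim/ltn_ind: p => p IH Hp i H.
case Op: (odd p).
- have alt : forall k, k < p -> tm (i + k).+1 = ~~ tm (i + k).
    move=> k Hk.
    case Oj: (odd (i + k)).
    + have Hj : ~~ odd (i + k + p) by rewrite oddD Oj Op.
      have e1 := H k (ltnW Hk). have e2 := H k.+1 Hk.
      have e3 := tm_even Hj.
      have -> : (i + k).+1 = i + k.+1 by lia.
      rewrite e1 e2.
      have -> : i + p + k.+1 = (i + k + p).+1 by lia.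
      have -> : i + p + k = i + k + p by lia.
      by rewrite e3.
    + by rewrite tm_even // Oj.
  have : forall k, k <= p -> tm (i + k) = xorb (odd k) (tm i).
    elim=> [|k IHk] Hk; first by rewrite addn0.
    have -> : i + k.+1 = (i + k).+1 by lia.
    rewrite alt // IHk 1?ltnW //=.
    by case: (odd k); case: (tm i).
  move=> /(_ p (leqnn p)); rewrite Op.
  have := H 0 (leq0n _); rewrite !addn0 => <-.
  by case: (tm i).
- have Hq : p = 2 * p./2 by rewrite {1}(half_spec p) Op addn0.
  apply: (IH p./2 _ _ i./2).
  + rewrite ltn_half_double -muln2; lia.
  + rewrite half_gt0; move: Hp Op; case: p {IH H Hq} => [//|[//|]] //.
  + move=> k Hk.
    have := H (2 * k); rewrite {1 2}(half_spec i) {2}Hq => /(_ ltac:(lia)).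
    have -> : 2 * i./2 + odd i + 2 * k = 2 * (i./2 + k) + odd i by lia.
    have -> : 2 * i./2 + odd i + 2 * p./2 + 2 * k = 2 * (i./2 + p./2 + k) + odd i by lia.
    have [e1 e2] := tmE (i./2 + k); have [e3 e4] := tmE (i./2 + p./2 + k).
    case: (odd i); rewrite ?addn0 ?e1 ?e2 ?e3 ?e4 //.
    by move=> /(congr1 negb); rewrite !negbK.
Qed.


Definition vvp (a c : bool) : nat := if a == c then 1 else if a then 0 else 2.
Definition vv n := vvp (tm n) (tm n.+1).
Definition code (a c : bool) : nat :=
  match a, c with false, true => 0 | true, true => 1 | true, false => 2 | false, false => 3 end.
Definition U n := code (tm n) (tm n.+1).

Lemma gU m : g (U m) = [:: U (2 * m); U (2 * m + 1)].
Proof.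
rewrite /U; have [e1 e2] := tmE m; have [e3 _] := tmE m.+1.
have -> : (2 * m).+1 = 2 * m + 1 by lia.
have -> : (2 * m + 1).+1 = 2 * m.+1 by lia.
rewrite e1 e2 e3; by case: (tm m); case: (tm m.+1).
Qed.

Lemma mkseqSc (T : Type) (f : nat -> T) n : mkseq f n.+1 = mkseq f n ++ [:: f n].
Proof. by rewrite /mkseq -addn1 iotaD map_cat. Qed.

Lemma morph_cat h s t : morph h (s ++ t) = morph h s ++ morph h t.
Proof. by rewrite /morph map_cat flatten_cat. Qed.

Lemma morphU n : morph g (mkseq U n) = mkseq U (2 * n).
Proof.
elim: n => [//|n IH].
rewrite mkseqSc morph_cat IH.
have -> : 2 * n.+1 = (2 * n).+1.+1 by lia.
rewrite !mkseqSc -catA /= /morph /= gU cats0.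
by have -> : (2 * n).+1 = 2 * n + 1 by lia.
Qed.

Lemma gpowE k : gpow k = mkseq U (2 ^ k).
Proof.
elim: k => [//|k IH].
by rewrite /gpow iterS -/(gpow k) IH morphU expnS.
Qed.

Lemma vtmE n : vtm n = vv n.
Proof.
rewrite /vtm /g_omega gpowE nth_mkseq.
  by rewrite /U /vv; case: (tm n); case: (tm n.+1).
apply: (ltn_trans (ltn_expl n (isT : 1 < 2))); by rewrite ltn_exp2l.
Qed.

Lemma vv_eq x y : vv x = vv y -> (tm x.+1 == tm y.+1) = (tm x == tm y).
Proof.
by rewrite /vv /vvp; case: (tm x); case: (tm x.+1); case: (tm y); case: (tm y.+1).
Qed.

Lemma vv_sqfree j q : 0 < q -> ~ (forall r, r < q -> vv (j + r) = vv (j + q + r)).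
Proof.
move=> Hq H.
case E: (tm j == tm (j + q)).
- apply: (overlap_free Hq (i := j)) => k.
  elim: k => [|k IHk] Hk; first by rewrite !addn0; apply/eqP.
  have := vv_eq (H k Hk).
  rewrite (IHk (ltnW Hk)) eqxx => /eqP.
  have -> : j + k.+1 = (j + k).+1 by lia.
  by have -> : j + q + k.+1 = (j + q + k).+1 by lia.
- have : forall k, k <= q -> tm (j + k) = tm j /\ tm (j + q + k) = tm (j + q).
    elim=> [|k IHk] Hk; first by rewrite !addn0.
    have [h1 h2] := IHk (ltnW Hk).
    have := H k Hk; rewrite /vv /vvp h1 h2.
    have -> : j + k.+1 = (j + k).+1 by lia.
    have -> : j + q + k.+1 = (j + q + k).+1 by lia.
    move: E; case: (tm j); case: (tm (j + q)) => // _;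
      case: (tm (j+k).+1); case: (tm (j+q+k).+1) => //.
  move=> /(_ q (leqnn q)) [h _].
  by move: E; rewrite h eqxx.
Qed.


Definition st j := 27 * j + 3 * tm j.

Lemma vv_lt3 j : vv j < 3.
Proof. by rewrite /vv /vvp; case: (tm j); case: (tm j.+1). Qed.

Lemma size_zeta_vv j : size (zeta (vv j)) = 27 * j.+1 + 3 * tm j.+1 - 3 * tm j - 27 * j.
Proof. rewrite /vv /vvp; case: (tm j); case: (tm j.+1) => /=; lia. Qed.

Lemma st_succ j : st j.+1 = st j + size (zeta (vv j)).
Proof. rewrite size_zeta_vv /st; have := leq_b1 (tm j); have := leq_b1 (tm j.+1); lia. Qed.

Lemma size_zeta_bnd j : 24 <= size (zeta (vv j)) <= 30.
Proof. by rewrite /vv /vvp; case: (tm j); case: (tm j.+1). Qed.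

Lemma size_morph_vv j : size (morph zeta (mkseq vv j)) = st j.
Proof.
elim: j => [//|j IH].
by rewrite mkseqSc morph_cat size_cat IH /morph /= cats0 st_succ.
Qed.

Lemma mkseq_split (T : Type) (f : nat -> T) K M :
  mkseq f (K + M) = mkseq f K ++ mkseq (fun k => f (K + k)) M.
Proof.
rewrite /mkseq iotaD map_cat; congr (_ ++ _).
have -> : iota K M = map (addn K) (iota 0 M) by rewrite -iotaDl addn0.
by rewrite -map_comp.
Qed.

Lemma zeta_vtm_vv n : zeta_vtm n = nth 0 (morph zeta (mkseq vv n.+1)) n.
Proof. by rewrite /zeta_vtm (eq_mkseq vtmE). Qed.

Lemma W_pref N n : n < size (morph zeta (mkseq vv N)) ->
  zeta_vtm n = nth 0 (morph zeta (mkseq vv N)) n.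
Proof.
move=> Hn; rewrite zeta_vtm_vv.
have Hn1 : n < size (morph zeta (mkseq vv n.+1)) by rewrite size_morph_vv /st; lia.
case: (leqP N n.+1) => HN.
- rewrite -(subnKC HN) mkseq_split morph_cat nth_cat.
  by rewrite Hn.
- rewrite -(subnKC (ltnW HN)) mkseq_split morph_cat nth_cat.
  by rewrite Hn1.
Qed.

Lemma size_morph_blk j K : st j + size (morph zeta (mkseq (fun k => vv (j + k)) K)) = st (j + K).
Proof. by rewrite -!size_morph_vv (mkseq_split vv j K) morph_cat size_cat. Qed.

Lemma Wblk j K x : x < size (morph zeta (mkseq (fun k => vv (j + k)) K)) ->
  zeta_vtm (st j + x) = nth 0 (morph zeta (mkseq (fun k => vv (j + k)) K)) x.
Proof.
move=> Hx.
rewrite (@W_pref (j + K)); last by rewrite size_morph_vv -size_morph_blk ltn_add2l.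
rewrite mkseq_split morph_cat nth_cat size_morph_vv ltnNge leq_addr /=.
by rewrite addKn.
Qed.

Lemma morph1 j : morph zeta (mkseq (fun k => vv (j + k)) 1) = zeta (vv j).
Proof. by rewrite /mkseq /morph /= addn0 cats0. Qed.

Lemma Wblk1 j x : x < size (zeta (vv j)) -> zeta_vtm (st j + x) = nth 0 (zeta (vv j)) x.
Proof. by move=> Hx; rewrite (@Wblk j 1) morph1. Qed.

Lemma cover_blk n : exists j o, n = st j + o /\ o < size (zeta (vv j)).
Proof.
elim: n => [|n [j [o [-> Ho]]]]; first by exists 0, 0; split; [by [] | have := size_zeta_bnd 0; lia].
case: (ltnP o.+1 (size (zeta (vv j)))) => H.
- by exists j, o.+1; rewrite addnS.
- exists j.+1, 0; rewrite st_succ; have := size_zeta_bnd j.+1; lia.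
Qed.

Lemma st_lt j j' : j < j' -> st j < st j'.
Proof.
elim: j' => [//|j' IH]; rewrite ltnS leq_eqVlt => /orP [/eqP ->|H].
  by rewrite st_succ; have := size_zeta_bnd j'; lia.
by rewrite st_succ; have := IH H; lia.
Qed.

Lemma st_le j j' : j <= j' -> st j <= st j'.
Proof. by rewrite leq_eqVlt => /orP [/eqP ->//|/st_lt/ltnW]. Qed.

Lemma st_lt_inv j j' : st j < st j' -> j < j'.
Proof. by move=> H; rewrite ltnNge; apply/negP => /st_le; lia. Qed.

Lemma take_drop_mkseq (T : Type) (x0 : T) (f : nat -> T) r n N : r + n <= N ->
  take n (drop r (mkseq f N)) = mkseq (fun k => f (r + k)) n.
Proof.
move=> H; apply: (@eq_from_nth _ x0).
  rewrite size_take size_drop size_mkseq size_mkseq; case: ltnP => //; lia.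
move=> k; rewrite size_take size_drop size_mkseq => Hk.
have Hk' : k < n by move: Hk; case: (ltnP n (N - r)) => Hc Hk; lia.
rewrite nth_take // nth_drop !nth_mkseq //; lia.
Qed.

Lemma factor_blk j K o m : o + m <= size (morph zeta (mkseq (fun k => vv (j + k)) K)) ->
  factor zeta_vtm (st j + o) m = take m (drop o (morph zeta (mkseq (fun k => vv (j + k)) K))).
Proof.
move=> H; apply: (@eq_from_nth _ 0).
  rewrite size_take size_drop size_mkseq; case: ltnP => //; lia.
move=> k; rewrite size_mkseq => Hk.
rewrite nth_take // nth_drop nth_mkseq // -addnA (@Wblk j K) //; lia.
Qed.

Definition mark := [:: 1; 1; 1; 0; 0; 0].

Lemma mark_st j : factor zeta_vtm (st j) 6 = mark.
Proof.
rewrite -[st j]addn0 (@factor_blk j 1) morph1 //; last by have := size_zeta_bnd j; lia.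
by have := vv_lt3 j; case: (vv j) => [|[|[|]]].
Qed.

Definition chk_mark := all (fun a => all (fun b => all (fun o =>
   take 6 (drop o (zeta a ++ zeta b)) != mark) (iota 1 (size (zeta a) - 1))) (iota 0 3)) (iota 0 3).
Lemma chk_mark_ok : chk_mark. Proof. by vm_compute. Qed.

Lemma mark_bnd n : factor zeta_vtm n 6 = mark -> exists j, n = st j.
Proof.
have [j [o [-> Ho]]] := cover_blk n.
case: o Ho => [|o] Ho; first by exists j; rewrite addn0.
have Hs : morph zeta (mkseq (fun k => vv (j + k)) 2) = zeta (vv j) ++ zeta (vv j.+1).
  by rewrite /mkseq /morph /= addn0 cats0 addn1.
rewrite (@factor_blk j 2) Hs; last by rewrite size_cat; have := size_zeta_bnd j; have := size_zeta_bnd j.+1; lia.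
have := chk_mark_ok; rewrite /chk_mark.
move=> /allP /(_ (vv j)); rewrite mem_iota vv_lt3 => /(_ isT).
move=> /allP /(_ (vv j.+1)); rewrite mem_iota vv_lt3 => /(_ isT).
move=> /allP /(_ o.+1); rewrite mem_iota.
have -> : (0 < o.+1 < 1 + (size (zeta (vv j)) - 1)) by have := size_zeta_bnd j; lia.
by move=> /(_ isT) /eqP.
Qed.


Notation W := zeta_vtm.

Lemma factor_shift (w : nat -> nat) x y m : (forall k, k < m -> w (x + k) = w (y + k)) ->
  factor w x m = factor w y m.
Proof. by move=> H; rewrite /factor /mkseq; apply/eq_in_map => k; rewrite mem_iota => /H. Qed.

Lemma pcode a c : a < 3 -> c < 3 -> (forall x, x < 24 -> nth 0 (zeta a) x = nth 0 (zeta c) x) -> a = c.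
Proof.
move=> Ha Hc H; have h7 := H 7 isT; have h18 := H 18 isT; clear H; move: Ha Hc h7 h18.
by case: a => [|[|[|]]] //; case: c => [|[|[|]]].
Qed.

Definition pre_ok a c s2 := all (fun x => (size (zeta c) <= x) || (nth 0 (zeta c) x == nth 0 (zeta a) x)) (iota 0 s2).
Definition suf_ok a z s1 := all (fun x => nth 0 (zeta z) (size (zeta z) - 1 - x) == nth 0 (zeta a) (size (zeta a) - 1 - x)) (iota 0 s1).
Definition bifix_ok := all (fun a => all (fun c => all (fun z => (c == a) || (z == a) ||
  all (fun s2 => ~~ pre_ok a c s2 || ~~ suf_ok a z (size (zeta a) - s2)) (iota 1 (size (zeta a) - 1)))
  (iota 0 3)) (iota 0 3)) (iota 0 3).
Lemma bifix_ok_true : bifix_ok. Proof. by vm_compute. Qed.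

Lemma bifix a c z s2 : a < 3 -> c < 3 -> z < 3 -> 0 < s2 -> s2 < size (zeta a) ->
  (forall x, x < s2 -> x < size (zeta c) -> nth 0 (zeta c) x = nth 0 (zeta a) x) ->
  (forall x, x < size (zeta a) - s2 -> nth 0 (zeta z) (size (zeta z) - 1 - x) = nth 0 (zeta a) (size (zeta a) - 1 - x)) ->
  c = a \/ z = a.
Proof.
move=> Ha Hc Hz h1 h2 Hpre Hsuf.
have := bifix_ok_true; rewrite /bifix_ok.
move=> /allP /(_ a); rewrite mem_iota Ha => /(_ isT).
move=> /allP /(_ c); rewrite mem_iota Hc => /(_ isT).
move=> /allP /(_ z); rewrite mem_iota Hz => /(_ isT).
case/orP => [/orP [/eqP -> | /eqP ->]|]; [by left | by right |].
move=> /allP /(_ s2); rewrite mem_iota.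
have -> : 0 < s2 < 1 + (size (zeta a) - 1) by lia.
move=> /(_ isT).
have -> : pre_ok a c s2.
  apply/allP => x; rewrite mem_iota => /andP [_ hx].
  case: (leqP (size (zeta c)) x) => //= hx2; apply/eqP; apply: Hpre; lia.
have -> : suf_ok a z (size (zeta a) - s2).
  apply/allP => x; rewrite mem_iota => /andP [_ hx]; apply/eqP; apply: Hsuf; lia.
by [].
Qed.

Section Sq.
Variables (i p : nat).
Hypothesis Hp : 35 <= p.
Hypothesis H : forall k, k < p -> W (i + k) = W (i + p + k).

Lemma Hx x : i <= x -> x < i + p -> W (x + p) = W x.
Proof. move=> h1 h2; have := H (k := x - i) ltac:(lia); have -> : i + (x - i) = x by lia.
by have -> : i + p + (x - i) = x + p by lia. Qed.

Lemma prop_blocks j1 j2 R : i <= st j1 -> st j2 = st j1 + p -> st (j1 + R) <= i + p ->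
  (forall r, r < R -> vv (j1 + r) = vv (j2 + r)) /\ st (j2 + R) = st (j1 + R) + p.
Proof.
move=> h1 h2; elim: R => [|R IH] h3; first by rewrite !addn0.
have h4 : st (j1 + R) <= i + p.
  by apply: leq_trans h3; apply: st_le; lia.
have [IH1 IH2] := IH h4.
have h5 : st (j1 + R) + size (zeta (vv (j1 + R))) <= i + p.
  by rewrite -st_succ -addnS.
have h6 : i <= st (j1 + R) by apply: leq_trans h1 (st_le _); lia.
have e : vv (j1 + R) = vv (j2 + R).
  apply: pcode; rewrite ?vv_lt3 // => x Hx24.
  have := size_zeta_bnd (j1 + R); have := size_zeta_bnd (j2 + R) => s1 s2.
  rewrite -Wblk1; last by lia.
  rewrite -Wblk1; last by lia.
  rewrite IH2.
  have -> : st (j1 + R) + p + x = (st (j1 + R) + x) + p by lia.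
  rewrite Hx; [by [] | lia | lia].
split.
  move=> r; rewrite ltnS leq_eqVlt => /orP [/eqP -> //|]; exact: IH1.
by rewrite !addnS !st_succ IH2 e; lia.
Qed.

Lemma shift_bnd j1 : i <= st j1 -> st j1 <= i + 29 -> exists j2, st j2 = st j1 + p.
Proof.
move=> h1 h2; have [j2 e] : exists j2, st j1 + p = st j2.
  apply: mark_bnd; rewrite -(mark_st j1); apply: factor_shift => k Hk.
  have -> : st j1 + p + k = (st j1 + k) + p by lia.
  rewrite Hx; [by [] | lia | lia].
by exists j2.
Qed.

Lemma big_sq : False.
Proof.
have [j0 [o0 [Ei Ho]]] := cover_blk i.
have sb := size_zeta_bnd.
case: o0 Ei Ho => [|o0] Ei Ho.
- rewrite addn0 in Ei.
  have [j2 e2] := shift_bnd (j1:=j0) ltac:(lia) ltac:(lia).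
  have lt12 : j0 < j2 by apply: st_lt_inv; lia.
  have h1 : i <= st j0 by lia.
  have e3 : j0 + (j2 - j0) = j2 by lia.
  have h3 : st (j0 + (j2 - j0)) <= i + p by rewrite e3 e2; lia.
  have [P1 _] := prop_blocks h1 e2 h3.
  apply: (vv_sqfree (j:=j0) (q := j2 - j0)); first lia.
  move=> r Hr; rewrite P1 //; congr vv; lia.
- have hb := st_succ j0.
  have := sb j0 => /andP [sz1 sz2].
  have [j2 e2] := shift_bnd (j1 := j0.+1) ltac:(lia) ltac:(lia).
  have lt12 : j0.+1 < j2 by apply: st_lt_inv; lia.
  have Hlast : st j2.-1 < i + p.
    rewrite ltnNge; apply/negP => Hc.
    have hlt : st j2.-1 < st j2 by apply: st_lt; lia.
    have [j' e'] : exists j', st j2.-1 - p = st j'.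
      apply: mark_bnd; rewrite -(mark_st j2.-1); apply: factor_shift => k Hk.
      have -> : st j2.-1 + k = (st j2.-1 - p + k) + p by lia.
      rewrite Hx; [by [] | lia | lia].
    have : j0 < j' by apply: st_lt_inv; lia.
    have : j' < j0.+1 by apply: st_lt_inv; lia.
    lia.
  have eq1 : j0.+1 + (j2 - j0.+1).-1 = j2.-1 by lia.
  have [P1 P2] := prop_blocks (j1 := j0.+1) (j2 := j2) (R := (j2 - j0.+1).-1) ltac:(lia) e2 ltac:(rewrite eq1; lia).
  rewrite eq1 in P2.
  have hsa := st_succ j2.-1; rewrite prednK ?(leq_ltn_trans _ lt12) // in hsa.
  have := sb j2.-1 => /andP [sa1 sa2].
  have Hpre : forall x, x < i + p - st j2.-1 -> x < size (zeta (vv (j2 + (j2 - j0.+1).-1))) ->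
      nth 0 (zeta (vv (j2 + (j2 - j0.+1).-1))) x = nth 0 (zeta (vv j2.-1)) x.
    move=> x hx hx2.
    rewrite -Wblk1 // -Wblk1; last by lia.
    rewrite P2.
    have -> : st j2.-1 + p + x = (st j2.-1 + x) + p by lia.
    rewrite Hx; [by [] | lia | lia].
  have Hsuf : forall x, x < size (zeta (vv j2.-1)) - (i + p - st j2.-1) ->
      nth 0 (zeta (vv j0)) (size (zeta (vv j0)) - 1 - x) = nth 0 (zeta (vv j2.-1)) (size (zeta (vv j2.-1)) - 1 - x).
    move=> x hx.
    rewrite -Wblk1; last by lia.
    rewrite -Wblk1; last by lia.
    have -> : st j2.-1 + (size (zeta (vv j2.-1)) - 1 - x) = (st j0 + (size (zeta (vv j0)) - 1 - x)) + p by lia.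
    rewrite Hx; [by [] | lia | lia].
  have hs1 : 0 < i + p - st j2.-1 by lia.
  have hs2 : i + p - st j2.-1 < size (zeta (vv j2.-1)) by lia.
  have [ca|za] := bifix (vv_lt3 _) (vv_lt3 _) (vv_lt3 _) hs1 hs2 Hpre Hsuf.
  + apply: (vv_sqfree (j:=j0.+1) (q := j2 - j0.+1)); first lia.
    move=> r Hr.
    case: (ltnP r (j2 - j0.+1).-1) => hr.
      rewrite P1 //; congr vv; lia.
    have -> : j0.+1 + r = j2.-1 by lia.
    rewrite -ca; congr vv; lia.
  + apply: (vv_sqfree (j:=j0) (q := j2 - j0.+1)); first lia.
    move=> [|r] Hr.
      rewrite addn0 za; congr vv; lia.
    have -> : j0 + r.+1 = j0.+1 + r by lia.
    rewrite P1; last by lia.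
    congr vv; lia.
Qed.

End Sq.


Definition mu (w : seq bool) : seq bool := flatten (map (fun b => [:: b; ~~ b]) w).
Definition T6 : seq (seq bool) := [:: [:: false; false; true; false; true; true]; [:: false; false; true; true; false; false]; [:: false; false; true; true; false; true]; [:: false; true; false; false; true; false]; [:: false; true; false; false; true; true]; [:: false; true; false; true; true; false]; [:: false; true; true; false; false; true]; [:: false; true; true; false; true; false]; [:: true; false; false; true; false; true]; [:: true; false; false; true; true; false]; [:: true; false; true; false; false; true]; [:: true; false; true; true; false; false]; [:: true; false; true; true; false; true]; [:: true; true; false; false; true; false]; [:: true; true; false; false; true; true]; [:: true; true; false; true; false; false]].

Definition T6_closed := all (fun w => (take 6 (mu w) \in T6) && (take 6 (drop 1 (mu w)) \in T6)) T6.
Lemma T6_closed_ok : T6_closed. Proof. by vm_compute. Qed.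

Lemma mu_tm m n : mu (mkseq (fun k => tm (m + k)) n) = mkseq (fun k => tm (2 * m + k)) (2 * n).
Proof.
elim: n => [//|n IH].
rewrite mkseqSc /mu map_cat flatten_cat -/(mu _) IH /=.
have -> : 2 * n.+1 = (2 * n).+1.+1 by lia.
rewrite mkseqSc mkseqSc -catA /=.
have [e1 e2] := tmE (m + n).
have -> : 2 * m + (2 * n).+1 = 2 * (m + n) + 1 by lia.
have -> : 2 * m + 2 * n = 2 * (m + n) by lia.
by rewrite e1 e2.
Qed.

Lemma tmfac i : mkseq (fun k => tm (i + k)) 6 \in T6.
Proof.
elim/ltn_ind: i => i IH.
case: i IH => [|i] IH; first by vm_compute.
set m := i.+1./2.
have Hm : m < i.+1 by rewrite /m ltn_half_double -muln2; lia.
have := T6_closed_ok; rewrite /T6_closed => /allP /(_ _ (IH m Hm)) /andP [h0 h1].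
have E : mkseq (fun k => tm (i.+1 + k)) 6 = take 6 (drop (odd i.+1) (mu (mkseq (fun k => tm (m + k)) 6))).
  rewrite mu_tm (take_drop_mkseq false); last by case: (odd i.+1).
  apply/eq_in_map => k _ /=; congr tm.
  rewrite {1}(half_spec i.+1) -/m; lia.
rewrite E; by case: (odd i.+1).
Qed.

Definition vvw (w : seq bool) := mkseq (fun k => vvp (nth false w k) (nth false w k.+1)) 5.
Definition F5 := map vvw T6.

Lemma vvfac j : mkseq (fun k => vv (j + k)) 5 \in F5.
Proof.
have -> : mkseq (fun k => vv (j + k)) 5 = vvw (mkseq (fun k => tm (j + k)) 6).
  rewrite /vvw; apply: (@eq_from_nth _ 0); rewrite ?size_mkseq // => k hk.
  rewrite !nth_mkseq //; try lia. by rewrite /vv addnS.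
by apply: map_f; apply: tmfac.
Qed.

Definition sqlist : seq (seq nat) := [:: [:: 0]; [:: 1]; [:: 0; 1]].

Definition chk_small := all (fun w => all (fun o => all (fun p =>
  let s := take (2 * p) (drop o (morph zeta w)) in
  (take p s == drop p s) ==> (take p s \in sqlist)) (iota 1 34))
  (iota 0 (size (zeta (head 0 w))))) F5.
Lemma chk_small_ok : chk_small. Proof. by vm_compute. Qed.

Lemma squares_part x : contains_square zeta_vtm x <-> x \in sqlist.
Proof.
split.
- move=> [xn [i Hi]].
  set p := size x.
  have p0 : 0 < p by rewrite /p lt0n size_eq0; apply/eqP.
  case: (leqP 35 p) => hp.
    exfalso; apply: (big_sq hp (i := i)) => k hk.
    have e1 : nth 0 (factor zeta_vtm i (2 * p)) k = nth 0 (x ++ x) k by rewrite Hi.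
    have e2 : nth 0 (factor zeta_vtm i (2 * p)) (p + k) = nth 0 (x ++ x) (p + k) by rewrite Hi.
    rewrite /factor !nth_mkseq in e1 e2; [ | lia | lia].
    rewrite e1 -addnA e2 !nth_cat -/p hk.
    have -> : (p + k < p) = false by lia.
    by rewrite addKn.
  have [j [o [Ei Ho]]] := cover_blk i.
  have sz := size_morph_blk j 5.
  have Hf := @factor_blk j 5 o (2 * p).
  rewrite -Ei in Hf; rewrite Hf in Hi; last first.
    move: sz; rewrite /st; have := leq_b1 (tm j); have := leq_b1 (tm (j + 5)); have := size_zeta_bnd j; lia.
  have := chk_small_ok; rewrite /chk_small.
  move=> /allP /(_ _ (vvfac j)) H1.
  have ho : o \in iota 0 (size (zeta (head 0 (mkseq (fun k => vv (j + k)) 5)))) by rewrite mem_iota /= addn0 Ho.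
  have H2 := allP H1 o ho.
  have hp1 : p \in iota 1 34 by rewrite mem_iota; lia.
  have H3 := allP H2 p hp1.
  move: H3 => /=.
  rewrite Hi take_size_cat // drop_size_cat // eqxx /=.
  by [].
- rewrite !inE => /or3P [/eqP ->|/eqP ->|/eqP ->]; (split; first by []).
  + exists 3; change (factor zeta_vtm (st 0 + 3) 2 = [:: 0; 0]).
    by rewrite (@factor_blk 0 1); vm_compute.
  + exists 0; change (factor zeta_vtm (st 0 + 0) 2 = [:: 1; 1]).
    by rewrite (@factor_blk 0 1); vm_compute.
  + exists 9; change (factor zeta_vtm (st 0 + 9) 4 = [:: 0; 1; 0; 1]).
    by rewrite (@factor_blk 0 1); vm_compute.
Qed.


Definition Rl : seq (bool*bool*nat) := [:: (false,true,0); (false,true,1); (false,true,2); (false,true,3); (false,true,4); (false,true,5); (false,true,6); (false,true,7); (false,true,8); (false,true,9); (false,true,10); (false,true,11); (false,true,12); (false,true,13); (false,true,14); (false,true,15); (false,true,16); (false,true,17); (false,true,18); (false,true,19); (false,true,20); (false,true,21); (false,true,22); (false,true,23); (false,true,24); (false,true,25); (false,true,26); (false,true,27); (false,true,28); (false,true,29); (true,true,0); (true,true,1); (true,true,2); (true,true,3); (true,true,4); (true,true,5); (true,true,6); (true,true,7); (true,true,8); (true,true,9); (true,true,10); (true,true,11); (true,true,12); (true,true,13); (true,true,14); (true,true,15); (true,true,16); (true,true,17); (true,true,18); (true,true,19); (true,true,20); (true,true,21); (true,true,22); (true,true,23); (true,true,24); (true,true,25); (true,true,26); (true,false,0); (true,false,1);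 (true,false,2); (true,false,3); (true,false,4); (true,false,5); (true,false,6); (true,false,7); (true,false,8); (true,false,9); (true,false,10); (true,false,11); (true,false,12); (true,false,13); (true,false,14); (true,false,15); (true,false,16); (true,false,17); (true,false,18); (true,false,19); (true,false,20); (true,false,21); (true,false,22); (true,false,23); (false,false,0); (false,false,1); (false,false,2); (false,false,3); (false,false,4); (false,false,5); (false,false,6); (false,false,7); (false,false,8); (false,false,9); (false,false,10); (false,false,11); (false,false,12); (false,false,13); (false,false,14); (false,false,15); (false,false,16); (false,false,17); (false,false,18); (false,false,19); (false,false,20); (false,false,21); (false,false,22); (false,false,23); (false,false,24); (false,false,25); (false,false,26)].
Definition cl : seq nat := [:: 0; 1; 2; 3; 4; 5; 6; 7; 8; 9; 10; 11; 12; 13; 14; 15; 16; 17; 18; 19; 20; 21; 22; 23; 24; 25; 26; 27; 28; 29; 30; 31; 32; 33; 34; 35; 36; 37; 38; 39; 40; 41; 42; 43; 44; 45; 46; 47; 48; 49; 50; 51; 52; 53; 54; 55; 29; 30; 31; 32; 33; 34; 35; 36; 56; 57; 58; 59; 41; 60; 43; 61; 62; 63; 64; 65; 66; 67; 68; 69; 70; 0; 1; 2; 3; 4; 5; 6; 71; 72; 73; 74; 11; 75; 13; 76; 77; 16; 78; 79; 80; 81; 82; 83; 84; 85; 86; 87].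
Definition repl : seq nat := [:: 0; 1; 2; 3; 4; 5; 6; 7; 8; 9; 10; 11; 12; 13; 14; 15; 16; 17; 18; 19; 20; 21; 22; 23; 24; 25; 26; 27; 28; 29; 30; 31; 32; 33; 34; 35; 36; 37; 38; 39; 40; 41; 42; 43; 44; 45; 46; 47; 48; 49; 50; 51; 52; 53; 54; 55; 64; 65; 66; 67; 69; 71; 72; 73; 74; 75; 76; 77; 78; 79; 80; 88; 89; 90; 91; 93; 95; 96; 98; 99; 100; 101; 102; 103; 104; 105; 106; 107].

Definition Lfun a c := size (zeta (vvp a c)).
Definition step (s : bool * bool * nat) (b : bool) : bool * bool * nat :=
  let: (a, c, o) := s in
  let O := 3 * a + 2 * o + b in
  let L0 := Lfun a (~~ a) in
  let L1 := Lfun (~~ a) c in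
  if O < L0 then (a, ~~ a, O)
  else if O < L0 + L1 then (~~ a, c, O - L0)
  else (c, ~~ c, O - L0 - L1).
Definition outs (s : bool * bool * nat) : nat := let: (a, c, o) := s in nth 0 (zeta (vvp a c)) o.
Definition piS (s : bool * bool * nat) : nat := nth 0 cl (index s Rl).
Definition sinit : bool * bool * nat := (false, true, 0).
Definition repst (k : nat) := nth sinit Rl (nth 0 repl k).

Definition C1 := all (fun s => (step s false \in Rl) && (step s true \in Rl)) Rl.
Definition C2 := all (fun s => (piS (step s false) == piS (step (repst (piS s)) false))
                         && (piS (step s true) == piS (step (repst (piS s)) true))) Rl.
Definition C3 := all (fun s => outs (repst (piS s)) == outs s) Rl.
Definition C4 := all (fun s => piS s < 88) Rl.
Lemma C1_ok : C1. Proof. by vm_compute. Qed.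
Lemma C2_ok : C2. Proof. by vm_compute. Qed.
Lemma C3_ok : C3. Proof. by vm_compute. Qed.
Lemma C4_ok : C4. Proof. by vm_compute. Qed.
Lemma s0_in : sinit \in Rl. Proof. by vm_compute. Qed.

Definition Rel n (s : bool * bool * nat) := let: (a, c, o) := s in
  exists j, tm j = a /\ tm j.+1 = c /\ n = st j + o /\ o < Lfun a c.

Lemma step_rel n s (b : bool) : Rel n s -> Rel (2 * n + b) (step s b).
Proof.
case: s => [[a c] o] [j [ea [ec [en ho]]]].
have [t1 t2] := tmE j; have [t3 t4] := tmE j.+1.
have E1 : (2 * j).+1 = 2 * j + 1 by lia.
have E2 : (2 * j + 1).+1 = 2 * j.+1 by lia.
have E3 : (2 * j.+1).+1 = 2 * j.+1 + 1 by lia.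
have hb := leq_b1 b.
rewrite /step; case: ifP => h1; [|case: ifP => h2].
- exists (2 * j); rewrite E1 t1 t2 ea; split => //; split => //; split => //.
  rewrite en /st t1 ea; move: h1 ho; case: a {ea t1 t2}; case: c {ec t3 t4}; rewrite /Lfun /=; lia.
- exists (2 * j + 1); rewrite E2 t2 t3 ea ec; split => //; split => //; split.
    rewrite en /st t2 ea; move: h1 h2 ho; case: a {ea t1 t2}; case: c {ec t3 t4}; rewrite /Lfun /=; lia.
  move: h1 h2 ho; case: a {ea t1 t2}; case: c {ec t3 t4}; rewrite /Lfun /=; lia.
- exists (2 * j.+1); rewrite E3 t3 t4 ec; split => //; split => //; split.
    rewrite en /st t3 ea ec; move: h1 h2 ho; case: a {ea t1 t2}; case: c {ec t3 t4}; rewrite /Lfun /=; lia.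
  move: h1 h2 ho; case: a {ea t1 t2}; case: c {ec t3 t4}; rewrite /Lfun /=; lia.
Qed.



Lemma bin_lsb_indep f f' n : n <= f -> n <= f' -> bin_lsb f n = bin_lsb f' n.
Proof.
elim: f f' n => [|f IH] [|f'] n /= H1 H2.
- by [].
- by move: H1; rewrite leqn0 => /eqP ->.
- by move: H2; rewrite leqn0 => /eqP ->.
- case: n H1 H2 => [//|n] H1 H2; congr cons; apply: IH.
  + rewrite leq_half_double -muln2; lia.
  + rewrite leq_half_double -muln2; lia.
Qed.

Lemma bin_msdS m : bin_msd m.+1 = rcons (bin_msd (m.+1)./2) (odd m.+1).
Proof.
rewrite /bin_msd.
have -> : bin_lsb m.+1 m.+1 = odd m.+1 :: bin_lsb m (m.+1)./2 by [].
rewrite rev_cons; congr rcons; congr rev; apply: bin_lsb_indep => //.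
rewrite leq_half_double -muln2; lia.
Qed.

Definition q0 : 'I_88 := inord (piS sinit).
Definition delta (q : 'I_88) (b : bool) : 'I_88 := inord (piS (step (repst q) b)).
Definition outq (q : 'I_88) : nat := outs (repst q).

Lemma auto_rel n : exists s, s \in Rl /\ Rel n s /\ foldl delta q0 (bin_msd n) = inord (piS s).
Proof.
elim/ltn_ind: n => n IH.
case: n IH => [|m] IH.
  exists sinit; split; first exact: s0_in.
  split; last by [].
  by exists 0; split; [by [] | split; [by [] | split; [by [] | by vm_compute]]].
set k := (m.+1)./2.
have Hk : k < m.+1 by rewrite /k ltn_half_double -muln2; lia.
have [s [sin [srel sf]]] := IH k Hk.
exists (step s (odd m.+1)); split.
  have := allP C1_ok s sin; by case: (odd m.+1) => /andP [].
split.
  have E : 2 * k + odd m.+1 = m.+1 by rewrite [RHS]half_spec.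
  by have := step_rel (odd m.+1) srel; rewrite E.
rewrite bin_msdS foldl_rcons -/k sf /delta.
have hp : piS s < 88 := allP C4_ok s sin.
rewrite (inordK hp).
have := allP C2_ok s sin; move=> /andP [/eqP e1 /eqP e2].
case: (odd m.+1).
  rewrite -e2; reflexivity.
rewrite -e1; reflexivity.
Qed.

Lemma dfao_ok : dfao_generates q0 delta outq zeta_vtm.
Proof.
move=> n; have [s [sin [srel sf]]] := auto_rel n.
rewrite sf /outq.
have hp : piS s < 88 := allP C4_ok s sin.
rewrite (inordK hp) (eqP (allP C3_ok s sin)).
case: s srel {sin sf hp} => [[a c] o] [j [ea [ec [-> ho]]]].
rewrite Wblk1; first by rewrite /vv ea ec.
by rewrite /vv ea ec.
Qed.

Theorem theorem4 :
  (forall x : seq nat,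
      contains_square zeta_vtm x <-> x \in [:: [:: 0]; [:: 1]; [:: 0; 1]])
  /\
  (exists (q0 : 'I_88) (delta : 'I_88 -> bool -> 'I_88) (out : 'I_88 -> nat),
      dfao_generates q0 delta out zeta_vtm).
Proof.
split; first exact: squares_part.
by exists q0, delta, outq; exact: dfao_ok.
Qed.
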